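(* Let $\sigma>0$, $a>0$, $m\in\mathbb R$, and $u_0(x)=\sqrt{\frac{a}{2\pi}}e^{-\frac a2(x-m)^2}$. Then the solution $u$ of $$\partial_t u=\sigma^2\partial_{xx}u+\Big(x^2-\int_{\mathbb R}y^2u(t,y)\,dy\Big)u,\quad x\in\mathbb R,\qquad u(0,\cdot)=u_0,$$ remains Gaussian for $0<t<T:=\frac{\arctan(a\sigma)}{2\sigma}$ and is given by $$u(t,x)=\sqrt{\frac{a(t)}{2\pi}}e^{-\frac{a(t)}{2}(x-m(t))^2},\quad a(t):=\frac{a\sigma-\tan(2\sigma t)}{\sigma(1+a\sigma\tan(2\sigma t))},\quad m(t):=\frac{ma\sigma}{a\sigma\cos(2\sigma t)-\sin(2\sigma t)}.$$
   Context: The solution of the equation is understood to exist as long as the nonlocal term $\int_{\mathbb R}x^2u(t,x)\,dx$ is finite. *)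

(* Defs.v *)
From Stdlib Require Import Reals Lra.
From Coquelicot Require Import Coquelicot.
Open Scope R_scope.

Definition gaussian (a m x : R) : R :=
  sqrt (a / (2 * PI)) * exp (- (a / 2) * (x - m) ^ 2).

Definition u0 (a m : R) : R -> R := gaussian a m.

Definition a_t (sigma a t : R) : R :=
  (a * sigma - tan (2 * sigma * t)) / (sigma * (1 + a * sigma * tan (2 * sigma * t))).

Definition m_t (sigma a m t : R) : R :=
  m * a * sigma / (a * sigma * cos (2 * sigma * t) - sin (2 * sigma * t)).

Definition u_explicit (sigma a m : R) (t x : R) : R :=
  gaussian (a_t sigma a t) (m_t sigma a m t) x.

Definition is_solution (sigma T : R) (v0 : R -> R) (u : R -> R -> R) : Prop :=
  (forall x, u 0 x = v0 x) /\
  (forall x, filterlim (fun t => u t x) (at_right 0) (locally (v0 x))) /\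
  (forall t, 0 < t < T ->
     exists (I : R) (ux : R -> R) (uxx : R -> R),
       is_RInt_gen (fun y => y ^ 2 * u t y)
                   (Rbar_locally m_infty) (Rbar_locally p_infty) I /\
       (forall x, is_derive (fun y => u t y) x (ux x)) /\
       (forall x, is_derive ux x (uxx x)) /\
       (forall x, is_derive (fun s => u s x) t
                    (sigma ^ 2 * uxx x + (x ^ 2 - I) * u t x))).

(* Main.v *)
Require Import Defs.
From Stdlib Require Import Reals.
From Coquelicot Require Import Coquelicot.
From Stdlib Require Import Lra FunctionalExtensionality.
Open Scope R_scope.

Lemma exd_cont (f : R -> R) x : ex_derive f x -> continuous f x.
Proof. intro h. apply (@ex_derive_continuous R_AbsRing R_NormedModule f x h). Qed.

Lemma exRInt_cont (f : R -> R) a b :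
  (forall z, Rmin a b <= z <= Rmax a b -> continuous f z) -> ex_RInt f a b.
Proof. intro h. apply (@ex_RInt_continuous R_CompleteNormedModule f a b h). Qed.

Lemma RInt_correctR (f : R -> R) a b : ex_RInt f a b -> is_RInt f a b (RInt f a b).
Proof. apply (@RInt_correct R_CompleteNormedModule). Qed.

Lemma RInt_scalR (f : R -> R) a b l : ex_RInt f a b ->
  RInt (fun x => l * f x) a b = l * RInt f a b.
Proof. intro h. exact (@RInt_scal R_CompleteNormedModule f a b l h). Qed.

Lemma RInt_comp_linR (f : R -> R) u v a b : ex_RInt f (u * a + v) (u * b + v) ->
  RInt (fun y => u * f (u * y + v)) a b = RInt f (u * a + v) (u * b + v).
Proof. intro h. exact (@RInt_comp_lin R_CompleteNormedModule f u v a b h). Qed.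

Definition ge (s : R) : R := exp (- s ^ 2).
Definition E (x : R) : R := RInt ge 0 x.

Lemma ge_cont : forall x, continuous ge x.
Proof. intros x. apply exd_cont. unfold ge. auto_derive. auto. Qed.

Lemma ge_exRInt a b : ex_RInt ge a b.
Proof. apply exRInt_cont. intros; apply ge_cont. Qed.

Lemma E_deriv (x : R) : is_derive E x (ge x).
Proof.
  apply is_derive_RInt with (a := 0).
  - exists (mkposreal 1 Rlt_0_1). intros y _. unfold E. apply RInt_correctR, ge_exRInt.
  - apply ge_cont.
Qed.

Definition hf (x t : R) : R := exp (- (x ^ 2 * (1 + t ^ 2))) / (1 + t ^ 2).
Definition H (x : R) : R := RInt (hf x) 0 1.

Lemma hf_cont x t : continuous (hf x) t.
Proof. apply exd_cont. unfold hf. auto_derive. nra. Qed.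

Lemma hf_deriv (x t : R) : is_derive (fun u => hf u t) x (- 2 * x * exp (- (x ^ 2 * (1 + t ^ 2)))).
Proof. unfold hf. auto_derive. nra. assert (1 + t * (t * 1) <> 0) by nra. simpl in *. field. nra. Qed.

Lemma dcont x t : continuity_2d_pt (fun u v => Derive (fun z => hf z v) u) x t.
Proof.
  apply continuity_2d_pt_ext with (f := fun u v => (-2 * u) * exp (- (u ^ 2 * (1 + v ^ 2)))).
  { intros u v. symmetry. apply is_derive_unique. apply hf_deriv. }
  apply continuity_2d_pt_mult.
  - apply continuity_2d_pt_mult. apply continuity_2d_pt_const. apply continuity_2d_pt_id1.
  - apply continuity_1d_2d_pt_comp with (f := exp) (g := fun u v => - (u ^ 2 * (1 + v ^ 2))).
    + apply derivable_continuous_pt, derivable_pt_exp.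
    + apply continuity_2d_pt_opp.
      apply continuity_2d_pt_ext with (f := fun u v => (u * u) * (1 + v * v)).
      { intros; ring. }
      apply continuity_2d_pt_mult.
      * apply continuity_2d_pt_mult; apply continuity_2d_pt_id1.
      * apply continuity_2d_pt_plus. apply continuity_2d_pt_const.
        apply continuity_2d_pt_mult; apply continuity_2d_pt_id2.
Qed.

Lemma H_deriv0 (x : R) : is_derive H x (RInt (fun t => Derive (fun u => hf u t) x) 0 1).
Proof.
  unfold H. apply (is_derive_RInt_param hf 0 1 x).
  - exists (mkposreal 1 Rlt_0_1). intros y _ t _. eexists. apply hf_deriv.
  - intros t _. apply dcont.
  - exists (mkposreal 1 Rlt_0_1). intros y _. apply exRInt_cont. intros; apply hf_cont.
Qed.

Lemma aux_eq (x t : R) : -2 * x * exp (- (x ^ 2 * (1 + t ^ 2))) = (-2 * exp (- x ^ 2)) * (x * ge (x * t + 0)).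
Proof.
  unfold ge.
  replace (exp (- (x ^ 2 * (1 + t ^ 2)))) with (exp (- x ^ 2) * exp (- (x*t+0)^2)); [ring|].
  rewrite <- exp_plus. f_equal. ring.
Qed.

Lemma H_deriv (x : R) : is_derive H x (- 2 * exp (- x ^ 2) * E x).
Proof.
  replace (- 2 * exp (- x ^ 2) * E x) with (RInt (fun t => Derive (fun u => hf u t) x) 0 1);
    [apply H_deriv0|].
  rewrite (RInt_ext _ (fun t => (- 2 * exp (- x ^ 2)) * (x * (ge (x * t + 0))))).
  2:{ intros t _. transitivity (- 2 * x * exp (- (x ^ 2 * (1 + t ^ 2)))).
      { apply is_derive_unique, hf_deriv. }
      apply aux_eq. }
  rewrite RInt_scalR.
  2:{ apply exRInt_cont. intros. apply exd_cont. unfold ge. auto_derive. auto. }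
  rewrite RInt_comp_linR. 2: apply ge_exRInt.
  unfold E. replace (x * 0 + 0) with 0 by ring. replace (x * 1 + 0) with x by ring.
  reflexivity.
Qed.

Lemma is_RInt_uniqueR (f : R -> R) a b l : is_RInt f a b l -> RInt f a b = l.
Proof. intro h. exact (@is_RInt_unique R_CompleteNormedModule f a b l h). Qed.

Lemma is_RInt_derive_R (f df : R -> R) a b :
  (forall x, Rmin a b <= x <= Rmax a b -> is_derive f x (df x)) ->
  (forall x, Rmin a b <= x <= Rmax a b -> continuous df x) ->
  is_RInt df a b (f b - f a).
Proof. intros h1 h2. exact (@is_RInt_derive R_CompleteNormedModule f df a b h1 h2). Qed.

Lemma zero_deriv_const (f : R -> R) : (forall x, is_derive f x 0) -> forall x, f x = f 0.
Proof.
  intros h x.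
  assert (h1 := is_RInt_derive_R f (fun _ => 0) 0 x (fun y _ => h y) (fun y _ => continuous_const 0 y)).
  assert (h2 := @is_RInt_const R_NormedModule 0 x 0).
  assert (e := is_RInt_uniqueR _ _ _ _ h1).
  assert (e2 := is_RInt_uniqueR _ _ _ _ h2).
  rewrite e2 in e. unfold scal in e; simpl in e; unfold mult in e; simpl in e. lra.
Qed.

Lemma h_const x : H x + E x ^ 2 = H 0 + E 0 ^ 2.
Proof.
  apply (zero_deriv_const (fun x => H x + E x ^ 2)).
  intros y. replace 0 with (- 2 * exp (- y ^ 2) * E y + 2 * E y * ge y).
  2:{ unfold ge; ring. }
  apply (@is_derive_plus R_AbsRing R_NormedModule). apply H_deriv.
  replace (2 * E y * ge y) with (INR 2 * ge y * E y ^ 1).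
  2:{ simpl; ring. }
  apply (is_derive_pow E 2 y (ge y)). apply E_deriv.
Qed.

Lemma E0 : E 0 = 0.
Proof. unfold E. exact (@RInt_point R_CompleteNormedModule 0 ge). Qed.

Lemma hf0 t : hf 0 t = / (1 + t²).
Proof. unfold hf. replace (- (0 ^ 2 * (1 + t ^ 2))) with 0 by ring. rewrite exp_0.
  unfold Rsqr. field. nra. Qed.

Lemma H0 : H 0 = PI / 4.
Proof.
  unfold H. rewrite <- atan_1.
  rewrite (RInt_ext _ (fun t => / (1 + t²))).
  2:{ intros t _. apply hf0. }
  replace (atan 1) with (atan 1 - atan 0) by (rewrite atan_0; ring).
  apply is_RInt_uniqueR. apply is_RInt_derive_R.
  - intros; apply is_derive_atan.
  - intros. apply exd_cont. auto_derive. unfold Rsqr; nra.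
Qed.

Lemma Esq x : E x ^ 2 = PI / 4 - H x.
Proof. assert (h := h_const x). rewrite E0, H0 in h. lra. Qed.

Lemma hf_ge0 x t : 0 <= hf x t.
Proof. unfold hf. apply Rle_mult_inv_pos. apply Rlt_le, exp_pos. nra. Qed.

Lemma hf_le x t : hf x t <= exp (- x ^ 2).
Proof.
  unfold hf. assert (1 <= 1 + t ^ 2) by nra.
  assert (exp (- (x ^ 2 * (1 + t ^ 2))) <= exp (- x ^ 2)).
  { assert (hq : - (x ^ 2 * (1 + t ^ 2)) <= - x ^ 2) by nra.
    destruct (Rle_lt_or_eq_dec _ _ hq) as [hl|he]. apply Rlt_le, exp_increasing; auto.
    rewrite he; lra. }
  assert (0 < exp (- (x ^ 2 * (1 + t ^ 2)))) by apply exp_pos.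
  apply Rle_trans with (exp (- (x ^ 2 * (1 + t ^ 2)))); auto.
  rewrite <- (Rmult_1_r (exp (- (x ^ 2 * (1 + t ^ 2))))) at 2.
  unfold Rdiv. apply Rmult_le_compat_l. lra.
  rewrite <- Rinv_1. apply Rinv_le_contravar; lra.
Qed.

Lemma H_bounds x : 0 <= H x <= exp (- x ^ 2).
Proof.
  assert (ex : ex_RInt (hf x) 0 1) by (apply exRInt_cont; intros; apply hf_cont).
  split.
  - apply RInt_ge_0; auto. lra. intros; apply hf_ge0.
  - unfold H. apply Rle_trans with (RInt (fun _ => exp (- x ^ 2)) 0 1).
    apply RInt_le; auto. lra. apply ex_RInt_const. intros; apply hf_le.
    rewrite RInt_const. unfold scal; simpl; unfold mult; simpl. lra.
Qed.

Lemma E_ge0 x : 0 <= x -> 0 <= E x.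
Proof.
  intros hx. unfold E. apply RInt_ge_0; auto. apply ge_exRInt.
  intros; unfold ge. apply Rlt_le, exp_pos.
Qed.

Lemma exp_negsq_le x : exp (- x ^ 2) <= / (1 + x ^ 2).
Proof.
  assert (h : 1 + x ^ 2 <= exp (x ^ 2)) by apply exp_ineq1_le.
  replace (exp (- x ^ 2)) with (/ exp (x ^ 2)).
  apply Rinv_le_contravar; nra.
  rewrite exp_Ropp. reflexivity.
Qed.

Lemma lim_p_eps (f : R -> R) l :
  (forall eps, 0 < eps -> exists N, forall x, N < x -> Rabs (f x - l) < eps) ->
  filterlim f (Rbar_locally p_infty) (locally l).
Proof.
  intros h P [eps He]. destruct (h eps (cond_pos eps)) as [N HN]. exists N.
  intros x Hx. apply He. apply HN. auto.
Qed.

Lemma lim_m_eps (f : R -> R) l :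
  (forall eps, 0 < eps -> exists N, forall x, x < N -> Rabs (f x - l) < eps) ->
  filterlim f (Rbar_locally m_infty) (locally l).
Proof.
  intros h P [eps He]. destruct (h eps (cond_pos eps)) as [N HN]. exists N.
  intros x Hx. apply He. apply HN. auto.
Qed.

Lemma lim_PIH : filterlim (fun x => PI / 4 - H x) (Rbar_locally p_infty) (locally (PI / 4)).
Proof.
  apply lim_p_eps. intros eps he. exists (/ eps). intros x hx.
  assert (hb := H_bounds x). assert (hl := exp_negsq_le x).
  assert (0 < / eps) by (apply Rinv_0_lt_compat; lra).
  assert (/ (1 + x ^ 2) < eps).
  { replace eps with (/ / eps) by (field; lra). apply Rinv_lt_contravar. nra. nra. }
  rewrite Rabs_left1; lra.
Qed.

Theorem E_lim : filterlim E (Rbar_locally p_infty) (locally (sqrt PI / 2)).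
Proof.
  assert (hp : 0 < PI / 4) by (generalize PI_RGT_0; lra).
  replace (sqrt PI / 2) with (sqrt (PI / 4)).
  2:{ rewrite sqrt_div_alt by lra. replace 4 with (2 ^ 2) by ring. rewrite sqrt_pow2 by lra. reflexivity. }
  apply filterlim_ext_loc with (f := fun x => sqrt (PI / 4 - H x)).
  { exists 0. intros x hx. rewrite <- Esq. apply sqrt_pow2. apply E_ge0; lra. }
  apply filterlim_comp with (G := locally (PI / 4)). apply lim_PIH.
  assert (c : continuous sqrt (PI / 4)). { apply exd_cont. auto_derive. auto. }
  exact c.
Qed.

Lemma lim_p_eps_inv (f : R -> R) l : filterlim f (Rbar_locally p_infty) (locally l) ->
  forall eps, 0 < eps -> exists N, forall x, N < x -> Rabs (f x - l) < eps.
Proof.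
  intros h eps he. destruct (h (fun y => Rabs (y - l) < eps)) as [N HN].
  { exists (mkposreal eps he). intros y hy. exact hy. }
  exists N. exact HN.
Qed.

Lemma E_odd x : E (- x) = - E x.
Proof.
  unfold E.
  assert (h := RInt_comp_linR ge (-1) 0 0 x (ge_exRInt _ _)).
  replace (-1 * 0 + 0) with 0 in h by ring. replace (-1 * x + 0) with (- x) in h by ring.
  rewrite <- h.
  rewrite (RInt_ext _ (fun y => -1 * ge y)).
  2:{ intros y _. unfold ge. f_equal. f_equal. f_equal. ring. }
  rewrite RInt_scalR by apply ge_exRInt. ring.
Qed.

Lemma E_lim_m : forall eps, 0 < eps -> exists N, forall x, x < N -> Rabs (E x - - (sqrt PI / 2)) < eps.
Proof.
  intros eps he. destruct (lim_p_eps_inv _ _ E_lim eps he) as [N HN].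
  exists (- N). intros x hx. replace x with (- - x) by ring. rewrite E_odd.
  replace (- E (- x) - - (sqrt PI / 2)) with (- (E (- x) - sqrt PI / 2)) by ring.
  rewrite Rabs_Ropp. apply HN. lra.
Qed.

Lemma gauss_deriv_x (A M x : R) : is_derive (gaussian A M) x (- A * (x - M) * gaussian A M x).
Proof. unfold gaussian. auto_derive. auto.
  replace ((x + - M) * ((x + - M) * 1)) with ((x-M)^2) by ring. field. Qed.

Definition Gg (A M y : R) : R := E (sqrt (A / 2) * (y - M)) / sqrt PI.

Lemma sqrtPI_pos : 0 < sqrt PI.
Proof. apply sqrt_lt_R0, PI_RGT_0. Qed.

Lemma Gg_deriv (A M y : R) : 0 < A -> is_derive (Gg A M) y (gaussian A M y).
Proof.
  intros hA. unfold Gg.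
  assert (hc : 0 < sqrt (A / 2)) by (apply sqrt_lt_R0; lra).
  assert (h1 : is_derive (fun y => E (sqrt (A / 2) * (y - M))) y
                 (sqrt (A / 2) * ge (sqrt (A / 2) * (y - M)))).
  { apply (is_derive_comp E (fun y => sqrt (A / 2) * (y - M))). apply E_deriv.
    auto_derive. auto. ring. }
  replace (gaussian A M y) with ((sqrt (A / 2) * ge (sqrt (A / 2) * (y - M))) / sqrt PI).
  - apply (is_derive_scal_l (fun y => E (sqrt (A / 2) * (y - M))) y _ (/ sqrt PI)) in h1.
    eapply is_derive_ext; [| exact h1]. intros t; reflexivity.
  - unfold gaussian, ge. replace (A / (2 * PI)) with ((A / 2) / PI) by (field; apply PI_neq0).
    rewrite (sqrt_div_alt (A / 2) PI) by apply PI_RGT_0.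
    replace ((sqrt (A / 2) * (y - M)) ^ 2) with (A / 2 * (y - M) ^ 2).
    2:{ rewrite Rpow_mult_distr, pow2_sqrt by lra. reflexivity. }
    replace (- (A / 2) * (y - M) ^ 2) with (- (A / 2 * (y - M) ^ 2)) by ring.
    field. apply Rgt_not_eq, sqrtPI_pos.
Qed.

Lemma Gg_lim_p A M : 0 < A -> filterlim (Gg A M) (Rbar_locally p_infty) (locally (1/2)).
Proof.
  intros hA. assert (hc : 0 < sqrt (A / 2)) by (apply sqrt_lt_R0; lra).
  assert (hp := sqrtPI_pos).
  apply lim_p_eps. intros eps he.
  destruct (lim_p_eps_inv _ _ E_lim (eps * sqrt PI)) as [N HN]. nra.
  exists (M + Rabs N / sqrt (A / 2)). intros y hy.
  assert (hz : N < sqrt (A / 2) * (y - M)).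
  { assert (Rabs N < sqrt (A / 2) * (y - M)).
    { apply Rmult_lt_reg_r with (/ sqrt (A / 2)). apply Rinv_0_lt_compat; auto.
      replace (sqrt (A / 2) * (y - M) * / sqrt (A / 2)) with (y - M) by (field; lra).
      unfold Rdiv in hy. lra. }
    generalize (Rle_abs N); lra. }
  specialize (HN _ hz). unfold Gg.
  replace (E (sqrt (A / 2) * (y - M)) / sqrt PI - 1 / 2) with
    ((E (sqrt (A / 2) * (y - M)) - sqrt PI / 2) / sqrt PI) by (field; lra).
  unfold Rdiv at 1. rewrite Rabs_mult. rewrite (Rabs_right (/ sqrt PI)).
  2:{ apply Rle_ge, Rlt_le, Rinv_0_lt_compat; auto. }
  apply Rmult_lt_reg_r with (sqrt PI); auto.
  rewrite Rmult_assoc, Rinv_l by lra. lra.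
Qed.

Lemma Gg_lim_m A M : 0 < A -> filterlim (Gg A M) (Rbar_locally m_infty) (locally (- (1/2))).
Proof.
  intros hA. assert (hc : 0 < sqrt (A / 2)) by (apply sqrt_lt_R0; lra).
  assert (hp := sqrtPI_pos).
  apply lim_m_eps. intros eps he.
  destruct (E_lim_m (eps * sqrt PI)) as [N HN]. nra.
  exists (M - Rabs N / sqrt (A / 2)). intros y hy.
  assert (hz : sqrt (A / 2) * (y - M) < N).
  { assert (sqrt (A / 2) * (y - M) < - Rabs N).
    { apply Rmult_lt_reg_r with (/ sqrt (A / 2)). apply Rinv_0_lt_compat; auto.
      replace (sqrt (A / 2) * (y - M) * / sqrt (A / 2)) with (y - M) by (field; lra).
      unfold Rdiv in hy. lra. }
    generalize (Rle_abs (- N)); rewrite Rabs_Ropp; lra. }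
  specialize (HN _ hz). unfold Gg.
  replace (E (sqrt (A / 2) * (y - M)) / sqrt PI - - (1 / 2)) with
    ((E (sqrt (A / 2) * (y - M)) - - (sqrt PI / 2)) / sqrt PI) by (field; lra).
  unfold Rdiv at 1. rewrite Rabs_mult. rewrite (Rabs_right (/ sqrt PI)).
  2:{ apply Rle_ge, Rlt_le, Rinv_0_lt_compat; auto. }
  apply Rmult_lt_reg_r with (sqrt PI); auto.
  rewrite Rmult_assoc, Rinv_l by lra. lra.
Qed.

Lemma RInt_gen_antideriv (F f : R -> R) la lb :
  (forall x, is_derive F x (f x)) -> (forall x, continuous f x) ->
  filterlim F (Rbar_locally m_infty) (locally la) ->
  filterlim F (Rbar_locally p_infty) (locally lb) ->
  is_RInt_gen f (Rbar_locally m_infty) (Rbar_locally p_infty) (lb - la).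
Proof.
  intros hd hc hm hp.
  assert (e : Derive F = f).
  { apply functional_extensionality. intros x. apply is_derive_unique, hd. }
  rewrite <- e. apply is_RInt_gen_Derive; auto.
  - apply filter_forall. intros [a b] x _. eexists; apply hd.
  - apply filter_forall. intros [a b] x _. rewrite e. apply hc.
Qed.

Lemma gauss_cont A M x : continuous (gaussian A M) x.
Proof. apply exd_cont. eexists. apply gauss_deriv_x. Qed.

Lemma int_g A M : 0 < A ->
  is_RInt_gen (gaussian A M) (Rbar_locally m_infty) (Rbar_locally p_infty) 1.
Proof.
  intros hA. replace 1 with (1/2 - - (1/2)) by field.
  apply RInt_gen_antideriv with (F := Gg A M).
  - intros; apply Gg_deriv; auto.
  - intros; apply gauss_cont.
  - apply Gg_lim_m; auto.
  - apply Gg_lim_p; auto.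
Qed.

Lemma decay (K c D : R) : 0 < c -> 0 <= K -> 0 <= D -> forall eps, 0 < eps ->
  exists N, forall z w, N < Rabs z -> Rabs w <= Rabs z + D ->
    Rabs (K * w * exp (- c * z ^ 2)) < eps.
Proof.
  intros hc hK hD eps he.
  exists (D + 1 + 2 * K / (c * eps)). intros z w hz hw.
  set (a := Rabs z) in *.
  assert (hq : 0 <= 2 * K / (c * eps)).
  { unfold Rdiv. apply Rmult_le_pos. lra. apply Rlt_le, Rinv_0_lt_compat. nra. }
  assert (ha1 : 1 < a) by lra. assert (haD : D < a) by lra.
  assert (ha2 : 2 * K < c * eps * a).
  { assert (hK2 : 2 * K / (c * eps) < a) by lra.
    apply Rmult_lt_compat_l with (r := c * eps) in hK2. 2: nra.
    replace (c * eps * (2 * K / (c * eps))) with (2 * K) in hK2 by (field; lra). lra. }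
  assert (hz2 : z ^ 2 = a * a). { unfold a. rewrite <- (pow2_abs z). ring. }
  assert (hX : 1 + c * z ^ 2 <= exp (c * z ^ 2)) by apply exp_ineq1_le.
  set (X := exp (c * z ^ 2)) in *.
  assert (hXp : 0 < X) by apply exp_pos.
  assert (e : exp (- c * z ^ 2) = / X).
  { unfold X. rewrite <- exp_Ropp. f_equal. ring. }
  rewrite e. rewrite Rabs_mult, Rabs_mult.
  rewrite (Rabs_right K) by lra. rewrite (Rabs_right (/ X)).
  2:{ apply Rle_ge, Rlt_le, Rinv_0_lt_compat; auto. }
  apply Rmult_lt_reg_r with X; auto.
  rewrite Rmult_assoc, Rinv_l, Rmult_1_r by lra.
  assert (hw0 : 0 <= Rabs w) by apply Rabs_pos.
  assert (K * Rabs w <= K * (2 * a)) by (apply Rmult_le_compat_l; lra).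
  assert (c * a * a < X) by nra.
  nra.
Qed.

Definition Pf (A M y : R) : R := - (y + M) * gaussian A M y / A.

Lemma Pf_eq A M y : Pf A M y = - ((sqrt (A / (2 * PI)) / A) * ((y - M) + 2 * M) * exp (- (A / 2) * (y - M) ^ 2)).
Proof. unfold Pf, gaussian. unfold Rdiv. ring. Qed.

Lemma Pf_lims A M : 0 < A ->
  filterlim (Pf A M) (Rbar_locally p_infty) (locally 0) /\
  filterlim (Pf A M) (Rbar_locally m_infty) (locally 0).
Proof.
  intros hA.
  assert (hK : 0 <= sqrt (A / (2 * PI)) / A).
  { unfold Rdiv. apply Rmult_le_pos. apply sqrt_pos. apply Rlt_le, Rinv_0_lt_compat; lra. }
  assert (hM : 0 <= 2 * Rabs M) by (generalize (Rabs_pos M); lra).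
  assert (hw : forall y, Rabs ((y - M) + 2 * M) <= Rabs (y - M) + 2 * Rabs M).
  { intros y. eapply Rle_trans. apply Rabs_triang. rewrite Rabs_mult, (Rabs_right 2) by lra. lra. }
  split.
  - apply lim_p_eps. intros eps he.
    destruct (decay _ (A / 2) _ ltac:(lra) hK hM eps he) as [N HN].
    exists (M + Rabs N). intros y hy. rewrite Pf_eq, Rminus_0_r, Rabs_Ropp.
    generalize (Rabs_pos N); intro. apply HN; auto. rewrite Rabs_right by lra. generalize (Rle_abs N); lra.
  - apply lim_m_eps. intros eps he.
    destruct (decay _ (A / 2) _ ltac:(lra) hK hM eps he) as [N HN].
    exists (M - Rabs N). intros y hy. rewrite Pf_eq, Rminus_0_r, Rabs_Ropp.
    generalize (Rabs_pos N); intro. apply HN; auto. rewrite Rabs_left by lra. generalize (Rle_abs N); lra.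
Qed.

Lemma Pf_deriv (A M y : R) : 0 < A ->
  is_derive (Pf A M) y (y ^ 2 * gaussian A M y - (M ^ 2 + 1 / A) * gaussian A M y).
Proof.
  intros hA. unfold Pf, gaussian. auto_derive.
  - auto.
  - replace ((y + - M) * ((y + - M) * 1)) with ((y - M) ^ 2) by ring. field. lra.
Qed.

Theorem moment2 A M : 0 < A ->
  is_RInt_gen (fun y => y ^ 2 * gaussian A M y) (Rbar_locally m_infty) (Rbar_locally p_infty)
    (M ^ 2 + 1 / A).
Proof.
  intros hA.
  set (k := M ^ 2 + 1 / A).
  assert (h1 := @is_RInt_gen_scal R_NormedModule _ _ _ _ (gaussian A M) k 1 (int_g A M hA)).
  assert (h2 : is_RInt_gen (fun y => y ^ 2 * gaussian A M y - k * gaussian A M y)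
                 (Rbar_locally m_infty) (Rbar_locally p_infty) (0 - 0)).
  { destruct (Pf_lims A M hA) as [hp hm].
    apply RInt_gen_antideriv with (F := Pf A M); auto.
    - intros; apply Pf_deriv; auto.
    - intros x. apply exd_cont. unfold gaussian. auto_derive. auto. }
  assert (h3 := @is_RInt_gen_plus R_NormedModule _ _ _ _ _ _ _ _ h1 h2).
  replace k with (plus (scal k 1) (0 - 0)).
  2:{ unfold plus, scal; simpl; unfold mult; simpl. ring. }
  eapply is_RInt_gen_ext; [| exact h3].
  apply filter_forall. intros _ x _. unfold plus, scal; simpl; unfold mult; simpl. ring.
Qed.

Lemma gauss_time (Af Mf : R -> R) (t dA dM x : R) : 0 < Af t -> is_derive Af t dA -> is_derive Mf t dM ->
  is_derive (fun s => gaussian (Af s) (Mf s) x) t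
    (gaussian (Af t) (Mf t) x * (dA / (2 * Af t) - dA / 2 * (x - Mf t) ^ 2 + Af t * dM * (x - Mf t))).
Proof.
  intros hA hdA hdM. unfold gaussian. auto_derive.
  - repeat split; try (eexists; eassumption).
    apply Rdiv_lt_0_compat; auto. generalize PI_RGT_0; lra.
  - replace (Derive (fun x0 => Af x0) t) with dA by (symmetry; apply is_derive_unique; exact hdA).
    replace (Derive (fun x0 => Mf x0) t) with dM by (symmetry; apply is_derive_unique; exact hdM).
    replace ((x + - Mf t) * ((x + - Mf t) * 1)) with ((x - Mf t) ^ 2) by ring.
    unfold Rdiv.
    assert (hpi := PI_RGT_0).
    assert (hq0 : 0 < Af t * / (2 * PI)) by (apply Rdiv_lt_0_compat; lra).
    assert (hq := sqrt_sqrt _ (Rlt_le _ _ hq0)).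
    assert (hqp := sqrt_lt_R0 _ hq0).
    set (q := sqrt (Af t * / (2 * PI))) in *.
    set (Ex := exp (- (Af t * / 2) * (x - Mf t) ^ 2)).
    assert (hA' : Af t = q * q * (2 * PI)) by (rewrite hq; field; lra).
    clearbody Ex. clearbody q. rewrite hA'. field. split; lra.
Qed.

Lemma tan_lin_deriv (sigma t : R) : cos (2 * sigma * t) <> 0 ->
  is_derive (fun t => tan (2 * sigma * t)) t (2 * sigma * (tan (2 * sigma * t) ^ 2 + 1)).
Proof.
  intros hc.
  apply (is_derive_comp tan (fun t => 2 * sigma * t)). apply is_derive_tan; auto.
  auto_derive. auto. ring.
Qed.

Lemma a_t_deriv (sigma a t : R) : sigma <> 0 -> cos (2 * sigma * t) <> 0 ->
  1 + a * sigma * tan (2 * sigma * t) <> 0 ->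
  is_derive (a_t sigma a) t (- 2 * (1 + sigma ^ 2 * a_t sigma a t ^ 2)).
Proof.
  intros hs hc h1.
  set (Rf := fun tau => (a * sigma - tau) / (sigma * (1 + a * sigma * tau))).
  assert (e : forall s, a_t sigma a s = Rf (tan (2 * sigma * s))) by (intros; reflexivity).
  eapply is_derive_ext. { intros s; symmetry; apply e. }
  rewrite e.
  assert (hR : is_derive Rf (tan (2 * sigma * t))
     (- (1 + a ^ 2 * sigma ^ 2) / (sigma * (1 + a * sigma * tan (2 * sigma * t)) ^ 2))).
  { unfold Rf. auto_derive. apply Rmult_integral_contrapositive; split; auto.
    field. split; auto. }
  assert (h := is_derive_comp Rf (fun s => tan (2 * sigma * s)) t _ _ hR (tan_lin_deriv sigma t hc)).
  replace (- 2 * (1 + sigma ^ 2 * Rf (tan (2 * sigma * t)) ^ 2)) with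
    (2 * sigma * (tan (2 * sigma * t) ^ 2 + 1) * (- (1 + a ^ 2 * sigma ^ 2) /
        (sigma * (1 + a * sigma * tan (2 * sigma * t)) ^ 2))).
  - exact h.
  - unfold Rf. field. split; auto.
Qed.

Lemma m_t_deriv (sigma a m t : R) : sigma <> 0 -> cos (2 * sigma * t) <> 0 ->
  1 + a * sigma * tan (2 * sigma * t) <> 0 ->
  a * sigma * cos (2 * sigma * t) - sin (2 * sigma * t) <> 0 ->
  is_derive (m_t sigma a m) t (2 * m_t sigma a m t / a_t sigma a t).
Proof.
  intros hs hc h1 hD.
  unfold m_t, a_t. auto_derive. auto.
  unfold tan in *.
  assert (hA : a * sigma - sin (2 * sigma * t) / cos (2 * sigma * t) <> 0).
  { intro e. apply hD. replace (a * sigma * cos (2 * sigma * t) - sin (2 * sigma * t)) with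
      ((a * sigma - sin (2 * sigma * t) / cos (2 * sigma * t)) * cos (2 * sigma * t)) by (field; auto).
    rewrite e; ring. }
  assert (hB : cos (2 * sigma * t) + a * sigma * sin (2 * sigma * t) <> 0).
  { intro e. apply h1. replace (1 + a * sigma * (sin (2 * sigma * t) / cos (2 * sigma * t))) with
      ((cos (2 * sigma * t) + a * sigma * sin (2 * sigma * t)) / cos (2 * sigma * t)) by (field; auto).
    rewrite e; field; auto. }
  field. repeat split; auto.
Qed.

Lemma u_time (sigma a m t x : R) : sigma <> 0 -> cos (2 * sigma * t) <> 0 ->
  1 + a * sigma * tan (2 * sigma * t) <> 0 ->
  a * sigma * cos (2 * sigma * t) - sin (2 * sigma * t) <> 0 ->
  0 < a_t sigma a t ->
  is_derive (fun s => u_explicit sigma a m s x) t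
    (sigma ^ 2 * ((a_t sigma a t ^ 2 * (x - m_t sigma a m t) ^ 2 - a_t sigma a t)
                  * gaussian (a_t sigma a t) (m_t sigma a m t) x)
     + (x ^ 2 - (m_t sigma a m t ^ 2 + 1 / a_t sigma a t)) * u_explicit sigma a m t x).
Proof.
  intros hs hc h1 hD hA.
  unfold u_explicit.
  assert (h := gauss_time (a_t sigma a) (m_t sigma a m) t _ _ x hA
                 (a_t_deriv sigma a t hs hc h1) (m_t_deriv sigma a m t hs hc h1 hD)).
  set (A := a_t sigma a t) in *. set (M := m_t sigma a m t) in *.
  set (g := gaussian A M x) in *.
  replace (sigma ^ 2 * ((A ^ 2 * (x - M) ^ 2 - A) * g) + (x ^ 2 - (M ^ 2 + 1 / A)) * g) with
    (g * (- 2 * (1 + sigma ^ 2 * A ^ 2) / (2 * A) - - 2 * (1 + sigma ^ 2 * A ^ 2) / 2 * (x - M) ^ 2 +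
          A * (2 * M / A) * (x - M))).
  - exact h.
  - field. lra.
Qed.

Lemma gauss_deriv2 (A M x : R) :
  is_derive (fun y => - A * (y - M) * gaussian A M y) x ((A ^ 2 * (x - M) ^ 2 - A) * gaussian A M x).
Proof.
  unfold gaussian. auto_derive. auto.
  replace ((x + - M) * ((x + - M) * 1)) with ((x - M) ^ 2) by ring. field.
Qed.

Lemma conds (sigma a t : R) : 0 < sigma -> 0 < a -> 0 <= t < atan (a * sigma) / (2 * sigma) ->
  0 < cos (2 * sigma * t) /\ 0 <= tan (2 * sigma * t) < a * sigma /\
  0 < 1 + a * sigma * tan (2 * sigma * t) /\
  0 < a * sigma * cos (2 * sigma * t) - sin (2 * sigma * t) /\ 0 < a_t sigma a t.
Proof.
  intros hs ha [ht0 ht].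
  assert (hb := atan_bound (a * sigma)).
  assert (hx : 2 * sigma * t < atan (a * sigma)).
  { apply Rmult_lt_compat_l with (r := 2 * sigma) in ht. 2: lra.
    replace (2 * sigma * (atan (a * sigma) / (2 * sigma))) with (atan (a * sigma)) in ht by (field; lra).
    exact ht. }
  assert (hx0 : 0 <= 2 * sigma * t) by nra.
  assert (hc : 0 < cos (2 * sigma * t)) by (apply cos_gt_0; lra).
  assert (htl : tan (2 * sigma * t) < a * sigma).
  { apply Rlt_le_trans with (tan (atan (a * sigma))). apply tan_increasing; lra. rewrite tan_atan; lra. }
  assert (ht0' : 0 <= tan (2 * sigma * t)).
  { destruct (Rle_lt_or_eq_dec _ _ hx0) as [hl|he].
    - apply Rlt_le, tan_gt_0; lra.
    - rewrite <- he, tan_0. lra. }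
  assert (has : 0 < a * sigma) by nra.
  assert (h1 : 0 < 1 + a * sigma * tan (2 * sigma * t)) by nra.
  repeat split; auto.
  - replace (a * sigma * cos (2 * sigma * t) - sin (2 * sigma * t)) with
      (cos (2 * sigma * t) * (a * sigma - tan (2 * sigma * t))) by (unfold tan; field; lra).
    nra.
  - unfold a_t. apply Rdiv_lt_0_compat; nra.
Qed.

Theorem proposition3p2 (sigma a m : R) :
  0 < sigma -> 0 < a ->
  is_solution sigma (atan (a * sigma) / (2 * sigma)) (u0 a m) (u_explicit sigma a m) /\
  (forall t, 0 < t < atan (a * sigma) / (2 * sigma) -> 0 < a_t sigma a t).
Proof.
  intros hs ha.
  assert (hT : 0 < atan (a * sigma) / (2 * sigma)).
  { apply Rdiv_lt_0_compat. 2: lra. rewrite <- atan_0. apply atan_increasing. nra. }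
  assert (h0 : forall x, u_explicit sigma a m 0 x = u0 a m x).
  { intros x. unfold u_explicit, u0, a_t, m_t. replace (2 * sigma * 0) with 0 by ring.
    rewrite tan_0, sin_0, cos_0. f_equal; field; lra. }
  split; [split; [|split] |].
  - exact h0.
  - intros x. rewrite <- h0.
    destruct (conds sigma a 0 hs ha ltac:(lra)) as [c1 [c2 [c3 [c4 c5]]]].
    assert (hd := u_time sigma a m 0 x ltac:(lra) ltac:(lra) ltac:(lra) ltac:(lra) c5).
    assert (hc : continuous (fun s => u_explicit sigma a m s x) 0).
    { apply exd_cont. eexists. exact hd. }
    eapply filterlim_filter_le_1. 2: exact hc.
    apply filter_le_within.
  - intros t ht.
    destruct (conds sigma a t hs ha ltac:(lra)) as [c1 [c2 [c3 [c4 c5]]]].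
    set (A := a_t sigma a t). set (M := m_t sigma a m t).
    exists (M ^ 2 + 1 / A), (fun y => - A * (y - M) * gaussian A M y),
      (fun y => (A ^ 2 * (y - M) ^ 2 - A) * gaussian A M y).
    split; [|split; [|split]].
    + apply moment2. exact c5.
    + intros x. apply gauss_deriv_x.
    + intros x. apply gauss_deriv2.
    + intros x. apply u_time; auto; lra.
  - intros t ht. destruct (conds sigma a t hs ha ltac:(lra)) as [c1 [c2 [c3 [c4 c5]]]]. exact c5.
Qed.
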